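(* Let $\Omega\subset\mathbf{R}^2$ be a convex bounded domain whose boundary $\gamma$ is a smooth simple closed curve with curvature $k$ satisfying $0<\beta<\min_\gamma k$, and let $r=1/\beta$. Let $F$ be a real polynomial on $\mathbf{R}^2$ such that for every $s$ and every $\epsilon$ in a neighborhood of $0$, $$F\big(\gamma(s)+rR_{-\epsilon}J\dot\gamma(s)\big)=F\big(\gamma(s)-rR_{\epsilon}J\dot\gamma(s)\big).$$ Then $F$ is constant on $\gamma_{+r}\cup\gamma_{-r}$, i.e. there is a constant $c$ with $F|_{\gamma_{+r}}=F|_{\gamma_{-r}}=c$.
   Context: $\gamma(s)$ is the arc-length parametrization of $\gamma$ in counterclockwise direction, $J$ is counterclockwise rotation by $\pi/2$, $R_\epsilon$ is counterclockwise rotation by angle $\epsilon$. The parallel curves are $\gamma_{\pm r}(s)=\gamma(s)\pm rJ\dot\gamma(s)$. The displayed identity expresses that $F$ takes equal values at the center of a positive Larmor circle (radius $r$) hitting $\gamma$ at $\gamma(s)$ at angle $\epsilon$ and at the center of the reflected negative Larmor circle in the two-sided magnetic billiard (billiard in which the magnetic field changes sign after each reflection). *)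

(* Defs.v *)
From Stdlib Require Import Reals Lra.
From Coquelicot Require Import Coquelicot.
Open Scope R_scope.

Definition pt := (R * R)%type.
Definition padd (p q : pt) : pt := (fst p + fst q, snd p + snd q).
Definition pscale (a : R) (p : pt) : pt := (a * fst p, a * snd p).
Definition psub (p q : pt) : pt := padd p (pscale (-1) q).

Definition J (p : pt) : pt := (- snd p, fst p).
Definition Rot (e : R) (p : pt) : pt :=
  (cos e * fst p - sin e * snd p, sin e * fst p + cos e * snd p).

Definition poly2 (N : nat) (c : nat -> nat -> R) (p : pt) : R :=
  sum_f_R0 (fun i => sum_f_R0 (fun j => c i j * fst p ^ i * snd p ^ j) N) N.

Definition curve (g1 g2 : R -> R) (s : R) : pt := (g1 s, g2 s).
Definition tangent (g1 g2 : R -> R) (s : R) : pt := (Derive g1 s, Derive g2 s).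
(* signed curvature (w.r.t. the counterclockwise normal J \dot\gamma) *)
Definition curvature (g1 g2 : R -> R) (s : R) : R :=
  Derive g1 s * Derive_n g2 2 s - Derive g2 s * Derive_n g1 2 s.

Definition smooth_simple_closed_arclength (g1 g2 : R -> R) (L : R) : Prop :=
  0 < L /\
  (forall n s, ex_derive_n g1 n s) /\ (forall n s, ex_derive_n g2 n s) /\
  (forall s, g1 (s + L) = g1 s /\ g2 (s + L) = g2 s) /\
  (forall s t, 0 <= s < L -> 0 <= t < L -> curve g1 g2 s = curve g1 g2 t -> s = t) /\
  (forall s, (Derive g1 s) ^ 2 + (Derive g2 s) ^ 2 = 1).

Definition par_plus (g1 g2 : R -> R) (r s : R) : pt :=
  padd (curve g1 g2 s) (pscale r (J (tangent g1 g2 s))).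
Definition par_minus (g1 g2 : R -> R) (r s : R) : pt :=
  psub (curve g1 g2 s) (pscale r (J (tangent g1 g2 s))).

(* Main.v *)
Require Import Defs.
From Stdlib Require Import Reals Lra.
From Coquelicot Require Import Coquelicot.
Open Scope R_scope.

Definition Dp (N : nat) (c : nat -> nat -> R) (p d : pt) : R :=
  sum_f_R0 (fun i => sum_f_R0 (fun j => c i j *
     (INR i * fst p ^ pred i * fst d * snd p ^ j + fst p ^ i * (INR j * snd p ^ pred j * snd d))) N) N.

Lemma is_derive_eq (f g : R -> R) x l l' :
  (forall y, f y = g y) -> l = l' -> is_derive f x l -> is_derive g x l'.
Proof. intros H <- Hf. apply (is_derive_ext f g x l H Hf). Qed.

Lemma sum_is_derive (f : nat -> R -> R) (df : nat -> R) t n :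
  (forall i, is_derive (f i) t (df i)) ->
  is_derive (fun x => sum_f_R0 (fun i => f i x) n) t (sum_f_R0 df n).
Proof.
  intros H. induction n as [|n IH]; simpl.
  - exact (H 0%nat).
  - exact (is_derive_plus _ _ _ _ _ IH (H (S n))).
Qed.

Lemma poly2_derive N c u v t du dv : is_derive u t du -> is_derive v t dv ->
  is_derive (fun x => poly2 N c (u x, v x)) t (Dp N c (u t, v t) (du, dv)).
Proof.
  intros Hu Hv. unfold poly2, Dp; simpl.
  apply (sum_is_derive (fun i x => sum_f_R0 (fun j => c i j * u x ^ i * v x ^ j) N)).
  intro i.
  apply (sum_is_derive (fun j x => c i j * u x ^ i * v x ^ j)). intro j.
  pose proof (is_derive_pow u i t du Hu) as h1.
  pose proof (is_derive_pow v j t dv Hv) as h2.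
  pose proof (is_derive_mult _ _ _ _ _ h1 h2 Rmult_comm) as h3.
  pose proof (is_derive_scal _ _ (c i j) _ h3) as h4.
  revert h4. apply is_derive_eq.
  - intro y. unfold mult; simpl. ring.
  - unfold mult, plus; simpl. ring.
Qed.

Lemma sum_scal (f : nat -> R) l n : sum_f_R0 (fun i => l * f i) n = l * sum_f_R0 f n.
Proof. induction n as [|n IH]; simpl; [ring| rewrite IH; ring]. Qed.

Lemma Dp_scal N c p x y l : Dp N c p (l * x, l * y) = l * Dp N c p (x, y).
Proof.
  unfold Dp. rewrite <- sum_scal. apply sum_eq; intros i _.
  rewrite <- sum_scal. apply sum_eq; intros j _. simpl. ring.
Qed.
Lemma Rot0 p : Rot 0 p = p.
Proof. destruct p; unfold Rot; simpl; rewrite cos_0, sin_0; f_equal; ring. Qed.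

Lemma deriv_const_loc (f : R -> R) x l K : locally x (fun y => K = f y) -> is_derive f x l -> l = 0.
Proof.
  intros Hl0 Hf.
  assert (Hl : locally x (fun y => f y = (fun _ => K) y)).
  { revert Hl0. apply filter_imp. intros y Hy. symmetry. exact Hy. }
  pose proof (is_derive_ext_loc _ _ _ _ Hl Hf) as H.
  pose proof (is_derive_const K x) as H0.
  apply is_derive_unique in H. apply is_derive_unique in H0.
  rewrite <- H. exact H0.
Qed.

Lemma deriv_zero_loc (f : R -> R) x l : locally x (fun y => 0 = f y) -> is_derive f x l -> l = 0.
Proof. apply deriv_const_loc. Qed.

Theorem proposition5p4 (g1 g2 : R -> R) (L beta : R) (N : nat) (c : nat -> nat -> R) :
  smooth_simple_closed_arclength g1 g2 L ->
  0 < beta ->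
  (forall s, beta < curvature g1 g2 s) ->
  (forall s, exists delta, 0 < delta /\ forall e, Rabs e < delta ->
     poly2 N c (padd (curve g1 g2 s) (pscale (/ beta) (Rot (- e) (J (tangent g1 g2 s))))) =
     poly2 N c (psub (curve g1 g2 s) (pscale (/ beta) (Rot e (J (tangent g1 g2 s)))))) ->
  exists C, forall s,
    poly2 N c (par_plus g1 g2 (/ beta) s) = C /\
    poly2 N c (par_minus g1 g2 (/ beta) s) = C.
Proof.
  intros [HL [Hd1 [Hd2 [_ [_ Hunit]]]]] Hb Hk Hsym.
  set (r := / beta).
  assert (Hr : 0 < r) by (apply Rinv_0_lt_compat; lra).
  assert (Hg1 : forall s, is_derive g1 s (Derive g1 s)) by (intro s; exact (Derive_correct _ _ (Hd1 1%nat s))).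
  assert (Hg2 : forall s, is_derive g2 s (Derive g2 s)) by (intro s; exact (Derive_correct _ _ (Hd2 1%nat s))).
  assert (Hg1' : forall s, is_derive (Derive g1) s (Derive_n g1 2 s)) by (intro s; exact (Derive_correct _ _ (Hd1 2%nat s))).
  assert (Hg2' : forall s, is_derive (Derive g2) s (Derive_n g2 2 s)) by (intro s; exact (Derive_correct _ _ (Hd2 2%nat s))).
  assert (Horth : forall s, Derive g1 s * Derive_n g1 2 s + Derive g2 s * Derive_n g2 2 s = 0).
  { intro s.
    pose proof (is_derive_plus _ _ _ _ _ (is_derive_pow _ 2 _ _ (Hg1' s)) (is_derive_pow _ 2 _ _ (Hg2' s))) as H.
    apply (deriv_const_loc _ _ _ 1) in H.
    - unfold plus in H; simpl in H |- *. apply Rmult_eq_reg_l with 2; [|lra]. rewrite Rmult_0_r, <- H. ring.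
    - apply filter_forall. intro y. unfold plus; simpl. pose proof (Hunit y) as Hy. simpl in Hy |- *. lra. }
  assert (Heq : forall s, poly2 N c (par_plus g1 g2 r s) = poly2 N c (par_minus g1 g2 r s)).
  { intro s. destruct (Hsym s) as [d [Hd H]]. specialize (H 0).
    rewrite Ropp_0, !Rot0 in H. apply H. rewrite Rabs_R0. exact Hd. }
  (* eps derivative *)
  assert (Heps : forall s,
    Dp N c (par_plus g1 g2 r s) (Derive g1 s, Derive g2 s) =
    Dp N c (par_minus g1 g2 r s) (Derive g1 s, Derive g2 s)).
  { intro s. destruct (Hsym s) as [d [Hd H]].
    set (a := Derive g1 s). set (b := Derive g2 s).
    set (u := fun e => g1 s + r * (cos (- e) * - b - sin (- e) * a)).
    set (v := fun e => g2 s + r * (sin (- e) * - b + cos (- e) * a)).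
    set (uq := fun e => g1 s + -1 * (r * (cos e * - b - sin e * a))).
    set (vq := fun e => g2 s + -1 * (r * (sin e * - b + cos e * a))).
    assert (Hu : is_derive u 0 (r * a)).
    { unfold u. auto_derive; auto. rewrite Ropp_0, cos_0, sin_0. ring. }
    assert (Hv : is_derive v 0 (r * b)).
    { unfold v. auto_derive; auto. rewrite Ropp_0, cos_0, sin_0. ring. }
    assert (Huq : is_derive uq 0 (r * a)).
    { unfold uq. auto_derive; auto. rewrite cos_0, sin_0. ring. }
    assert (Hvq : is_derive vq 0 (r * b)).
    { unfold vq. auto_derive; auto. rewrite cos_0, sin_0. ring. }
    pose proof (is_derive_minus _ _ _ _ _ (poly2_derive N c u v 0 _ _ Hu Hv)
                  (poly2_derive N c uq vq 0 _ _ Huq Hvq)) as HD.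
    apply deriv_zero_loc in HD.
    - unfold minus, plus, opp in HD; simpl in HD.
      rewrite !Dp_scal in HD.
      assert (E1 : (u 0, v 0) = par_plus g1 g2 r s).
      { unfold u, v, par_plus, padd, pscale, J, Rot, curve, tangent; simpl.
        rewrite Ropp_0, cos_0, sin_0. unfold a, b. f_equal; ring. }
      assert (E2 : (uq 0, vq 0) = par_minus g1 g2 r s).
      { unfold uq, vq, par_minus, psub, padd, pscale, J, Rot, curve, tangent; simpl.
        rewrite cos_0, sin_0. unfold a, b. f_equal; ring. }
      rewrite E1, E2 in HD.
      apply Rmult_eq_reg_l with r; [|lra]. lra.
    - exists (mkposreal d Hd). intros y Hy.
      change (Rabs (y + - 0) < d) in Hy. rewrite Ropp_0, Rplus_0_r in Hy.
      specialize (H y Hy).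
      unfold minus, plus, opp; simpl.
      change (0 = poly2 N c (u y, v y) - poly2 N c (uq y, vq y)).
      replace (u y, v y) with (padd (curve g1 g2 s) (pscale (/ beta) (Rot (- y) (J (tangent g1 g2 s))))) by reflexivity.
      replace (uq y, vq y) with (psub (curve g1 g2 s) (pscale (/ beta) (Rot y (J (tangent g1 g2 s))))) by reflexivity.
      rewrite H. ring. }
  set (up := fun s => g1 s + r * - Derive g2 s).
  set (vp := fun s => g2 s + r * Derive g1 s).
  set (um := fun s => g1 s + -1 * (r * - Derive g2 s)).
  set (vm := fun s => g2 s + -1 * (r * Derive g1 s)).
  assert (Ep : forall s, par_plus g1 g2 r s = (up s, vp s)) by reflexivity.
  assert (Em : forall s, par_minus g1 g2 r s = (um s, vm s)) by reflexivity.
  assert (Hup : forall s, is_derive up s (Derive g1 s + r * - Derive_n g2 2 s)).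
  { intro s. unfold up. apply (is_derive_plus _ _ _ _ _ (Hg1 s)).
    apply is_derive_scal. apply (is_derive_opp _ _ _ (Hg2' s)). }
  assert (Hvp : forall s, is_derive vp s (Derive g2 s + r * Derive_n g1 2 s)).
  { intro s. unfold vp. apply (is_derive_plus _ _ _ _ _ (Hg2 s)).
    apply is_derive_scal. apply (Hg1' s). }
  assert (Hum : forall s, is_derive um s (Derive g1 s + -1 * (r * - Derive_n g2 2 s))).
  { intro s. unfold um. apply (is_derive_plus _ _ _ _ _ (Hg1 s)).
    apply is_derive_scal. apply is_derive_scal. apply (is_derive_opp _ _ _ (Hg2' s)). }
  assert (Hvm : forall s, is_derive vm s (Derive g2 s + -1 * (r * Derive_n g1 2 s))).
  { intro s. unfold vm. apply (is_derive_plus _ _ _ _ _ (Hg2 s)).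
    apply is_derive_scal. apply is_derive_scal. apply (Hg1' s). }
  assert (HGp : forall s, is_derive (fun x => poly2 N c (up x, vp x)) s 0).
  { intro s.
    set (a := Derive g1 s). set (b := Derive g2 s).
    set (a2 := Derive_n g1 2 s). set (b2 := Derive_n g2 2 s).
    set (k := curvature g1 g2 s).
    assert (Hkd : k = a * b2 - b * a2) by reflexivity.
    assert (Hk0 : 0 < k) by (pose proof (Hk s); unfold k; lra).
    assert (Ho : a * a2 + b * b2 = 0) by apply Horth.
    assert (Hn : a ^ 2 + b ^ 2 = 1) by apply Hunit.
    assert (X1 : a + r * - b2 = (1 - r * k) * a).
    { assert (Z : a + r * - b2 - (1 - r * k) * a = r * b2 * (a ^ 2 + b ^ 2 - 1) - r * b * (a * a2 + b * b2)) by (rewrite Hkd; ring).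
      rewrite Hn, Ho in Z. lra. }
    assert (X2 : b + r * a2 = (1 - r * k) * b).
    { assert (Z : b + r * a2 - (1 - r * k) * b = - r * a2 * (a ^ 2 + b ^ 2 - 1) + r * a * (a * a2 + b * b2)) by (rewrite Hkd; ring).
      rewrite Hn, Ho in Z. lra. }
    assert (X3 : a + -1 * (r * - b2) = (1 + r * k) * a).
    { assert (Z : a + -1 * (r * - b2) - (1 + r * k) * a = - (r * b2 * (a ^ 2 + b ^ 2 - 1) - r * b * (a * a2 + b * b2))) by (rewrite Hkd; ring).
      rewrite Hn, Ho in Z. lra. }
    assert (X4 : b + -1 * (r * a2) = (1 + r * k) * b).
    { assert (Z : b + -1 * (r * a2) - (1 + r * k) * b = - (- r * a2 * (a ^ 2 + b ^ 2 - 1) + r * a * (a * a2 + b * b2))) by (rewrite Hkd; ring).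
      rewrite Hn, Ho in Z. lra. }
    pose proof (poly2_derive N c up vp s _ _ (Hup s) (Hvp s)) as Dp1.
    pose proof (poly2_derive N c um vm s _ _ (Hum s) (Hvm s)) as Dm1.
    fold a b a2 b2 in Dp1, Dm1.
    rewrite X1, X2, Dp_scal in Dp1. rewrite X3, X4, Dp_scal in Dm1.
    pose proof (is_derive_minus _ _ _ _ _ Dp1 Dm1) as HD.
    apply deriv_zero_loc in HD.
    2:{ apply filter_forall. intro y. unfold minus, plus, opp; simpl.
        rewrite <- Ep, <- Em, Heq. ring. }
    unfold minus, plus, opp in HD; simpl in HD.
    pose proof (Heps s) as He. rewrite Ep, Em in He. fold a b in He.
    rewrite <- He in HD.
    set (S := Dp N c (up s, vp s) (a, b)) in *.
    assert (HS : S = 0).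
    { assert (2 * r * k * S = 0) by lra.
      assert (0 < 2 * r * k) by (apply Rmult_lt_0_compat; lra).
      apply Rmult_eq_reg_l with (2 * r * k); lra. }
    replace 0 with ((1 - r * k) * Dp N c (up s, vp s) (a, b)). exact Dp1.
    change (Dp N c (up s, vp s) (a, b)) with S. rewrite HS. ring. }
  exists (poly2 N c (up 0, vp 0)). intro s.
  assert (Hc : poly2 N c (up s, vp s) = poly2 N c (up 0, vp 0)).
  { destruct (Rtotal_order s 0) as [Hs|[Hs|Hs]].
    - apply (eq_is_derive (fun x => poly2 N c (up x, vp x))); auto.
    - rewrite Hs; reflexivity.
    - symmetry. apply (eq_is_derive (fun x => poly2 N c (up x, vp x))); auto. }
  split.
  - rewrite Ep. exact Hc.
  - rewrite <- Heq, Ep. exact Hc.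
Qed.
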